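(* Let $P:\mathbb{R}^d\to\mathbb{R}$ be a positive homogeneous function and let $\widetilde P$ be a complex-valued function which is continuous on an open neighborhood of $0$ in $\mathbb{R}^d$. The following are equivalent: (1) $\widetilde P(\xi)=o(P(\xi))$ as $\xi\to0$; (2) for every $E\in\mathrm{Exp}(P)$, $\widetilde P$ is subhomogeneous with respect to $E$; (3) there exists $E\in\mathrm{Exp}(P)$ for which $\widetilde P$ is subhomogeneous with respect to $E$.
   Context: For $E\in\mathrm{End}(\mathbb{R}^d)$, $t>0$, $t^E:=\exp(\log(t)E)$; $\{t^E\}$ is contracting if $\lim_{t\to0}\|t^E\|=0$. $P:\mathbb{R}^d\to\mathbb{C}$ is homogeneous w.r.t. $E$ if $P(t^E\xi)=tP(\xi)$ for all $t>0,\xi$; $\mathrm{Exp}(P)$ is the set of such $E$. A real $P$ is positive definite if $P\ge0$ and vanishes only at $0$. $P:\mathbb{R}^d\to\mathbb{R}$ is positive homogeneous if continuous, positive definite, $\mathrm{Exp}(P)\ne\emptyset$, and $S_P=\{P=1\}$ compact; then every $\{t^E\}$, $E\in\mathrm{Exp}(P)$, is contracting. Given a complex-valued $\widetilde P$ continuous on an open neighborhood $\mathcal U$ of $0$ and $E$ with $\{t^E\}$ contracting, $\widetilde P$ is subhomogeneous with respect to $E$ if for each $\epsilon>0$ and compact $K\subseteq\mathbb{R}^d$ there is $\tau>0$ with $|\widetilde P(t^E\xi)|\le\epsilon t$ for all $0<t<\tau$, $\xi\in K$. *)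

(* Defs.v *)
From HB Require Import structures.
From mathcomp Require Import all_boot all_order all_algebra.
From mathcomp Require Import all_classical all_reals all_analysis.
From mathcomp Require Import complex.
Set Implicit Arguments. Unset Strict Implicit. Unset Printing Implicit Defensive.
Import Order.TTheory GRing.Theory Num.Theory.
Import numFieldNormedType.Exports.
Local Open Scope classical_set_scope.
Local Open Scope ring_scope.

(* R^d is modelled by column vectors 'cV[R]_d, End(R^d) by 'M[R]_d
   (acting by left multiplication), C by R[i] with modulus Normc.normc. *)

Definition cmod (R : realType) (z : R[i]) : R := Normc.normc z.

Definition expmx (R : realType) (d : nat) (A : 'M[R]_d) : 'M[R]_d :=
  limn (series (fun k : nat => (k`!%:R)^-1 *: A ^+ k)).

Definition tpow (R : realType) (d : nat) (t : R) (E : 'M[R]_d) : 'M[R]_d :=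
  expmx (ln t *: E).

Definition contracting (R : realType) (d : nat) (E : 'M[R]_d) : Prop :=
  (fun t : R => `|tpow t E|) x @[x --> (0 : R)^'+] --> (0 : R).

Definition homogeneous (R : realType) (d : nat) (P : 'cV[R]_d -> R)
    (E : 'M[R]_d) : Prop :=
  forall t : R, 0 < t -> forall xi : 'cV[R]_d, P (tpow t E *m xi) = t * P xi.

Definition ExpSet (R : realType) (d : nat) (P : 'cV[R]_d -> R) : set 'M[R]_d :=
  [set E | homogeneous P E].

Definition positive_definite (R : realType) (d : nat) (P : 'cV[R]_d -> R) : Prop :=
  (forall xi, 0 <= P xi) /\ (forall xi, P xi = 0 -> xi = 0).

Definition positive_homogeneous (R : realType) (d : nat) (P : 'cV[R]_d -> R) : Prop :=
  [/\ continuous P, positive_definite P, ExpSet P !=set0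
    & compact [set xi | P xi = 1]].

Definition ccontinuous_on (R : realType) (d : nat) (U : set 'cV[R]_d)
    (f : 'cV[R]_d -> R[i]) : Prop :=
  forall x, U x -> forall e : R, 0 < e ->
    \forall y \near x, cmod (f y - f x) < e.

Definition subhomogeneous (R : realType) (d : nat) (U : set 'cV[R]_d)
    (Pt : 'cV[R]_d -> R[i]) (E : 'M[R]_d) : Prop :=
  [/\ open U, U 0, ccontinuous_on U Pt, contracting E
    & forall eps : R, 0 < eps -> forall K : set 'cV[R]_d, compact K ->
        exists2 tau : R, 0 < tau &
          forall t : R, 0 < t -> t < tau -> forall xi, K xi ->
            cmod (Pt (tpow t E *m xi)) <= eps * t].

Definition little_o_at0 (R : realType) (d : nat) (Pt : 'cV[R]_d -> R[i])
    (P : 'cV[R]_d -> R) : Prop :=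
  forall eps : R, 0 < eps ->
    \forall xi \near (0 : 'cV[R]_d)^', cmod (Pt xi) <= eps * P xi.

(* Main.v *)
Require Import Defs.
From HB Require Import structures.
From mathcomp Require Import all_boot all_order all_algebra.
From mathcomp Require Import all_classical all_reals all_analysis.
From mathcomp Require Import complex.
From mathcomp Require Import ring lra.
Import Order.TTheory GRing.Theory Num.Theory.
Import numFieldNormedType.Exports.
Local Open Scope classical_set_scope.
Local Open Scope ring_scope.
Lemma entry_le_norm (R : realType) m n (A : 'M[R]_(m, n)) i j : `|A i j| <= `|A|.
Proof.
by rewrite [leRHS]/Num.Def.normr /= mx_normrE; apply/bigmax_geP; right => /=; exists (i, j).
Qed.

Lemma norm_le_entries (R : realType) m n (A : 'M[R]_(m, n)) (c : R) :
  0 <= c -> (forall i j, `|A i j| <= c) -> `|A| <= c.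
Proof.
move=> c0 H; rewrite [leLHS]/Num.Def.normr /= mx_normrE.
by apply: bigmax_le => // -[i j] _; exact: H.
Qed.

Lemma norm_tr (R : realType) m n (A : 'M[R]_(m, n)) : `|A^T| = `|A|.
Proof.
apply/eqP; rewrite eq_le; apply/andP; split; apply: norm_le_entries => // i j.
- by rewrite mxE; exact: entry_le_norm.
- by have := @entry_le_norm _ _ _ A^T j i; rewrite mxE.
Qed.

Lemma tr_continuous (R : realType) d : continuous (fun v : 'rV[R]_d => v^T).
Proof.
move=> x; apply/(@cvgrPdist_lt _ _ _ _ (nbhs_filter x)) => e e0.
apply/nbhs_ballP; exists e => //= y; rewrite -ball_normE /ball_ /= => H.
have -> : x^T - y^T = (x - y)^T by rewrite linearB.
by rewrite norm_tr.
Qed.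

Lemma sphere_lb {R : realType} {d} {P : 'cV[R]_d -> R} :
  continuous P -> positive_definite P ->
  forall r : R, 0 < r -> exists2 m : R, 0 < m & forall y, `|y| = r -> m <= P y.
Proof.
move=> Pc [Pge0 Pd] r r0.
pose S := [set v : 'rV[R]_d | `|v| = r].
have cS : compact S.
  apply: bounded_closed_compact.
  - exists r; split; [exact: num_real| move=> M rM v /= ->; exact: ltW].
  - apply: (@closed_comp _ _ _ [set r]).
      by move=> *; exact: norm_continuous.
    apply: accessible_closed_set1; apply: hausdorff_accessible; exact: Rhausdorff.
pose Q := (fun v => P v^T) @` S.
have cQ : compact Q.
  apply: continuous_compact cS; apply: continuous_subspaceT => x.
  apply: continuous_comp; [exact: tr_continuous | exact: Pc].
have clQ : closed Q := compact_closed (@Rhausdorff R) cQ.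
have nQ0 : ~ Q 0.
  move=> [v Sv /Pd/eqP]; rewrite trmx_eq0 => /eqP v0.
  by move: Sv; rewrite /S /= v0 normr0 => r00; move: r0; rewrite -r00 ltxx.
have : open (~` Q) by rewrite openC.
rewrite openE => /(_ 0 nQ0) /nbhs_ballP [m m0 Hm].
exists m => // y yr; rewrite leNgt; apply/negP => Pym.
apply: (Hm (P y)).
  by rewrite -ball_normE /ball_ /= sub0r normrN ger0_norm.
by exists y^T; [rewrite /S /= norm_tr | rewrite trmxK].
Unshelve. all: by end_near.
Qed.

Lemma hom_P0 {R : realType} {d} {P : 'cV[R]_d -> R} {E} : homogeneous P E -> P 0 = 0.
Proof. by move=> H; have := H 2 (ltr0Sn _ 1) 0; rewrite mulmx0 => H2; lra. Qed.

Lemma hom_inj {R : realType} {d} {P : 'cV[R]_d -> R} {E t} {x : 'cV[R]_d} :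
  homogeneous P E -> positive_definite P -> 0 < t -> tpow t E *m x = 0 -> x = 0.
Proof.
move=> H [_ Pd] t0 e; have := H t t0 x; rewrite e (hom_P0 H) => /esym/eqP.
by rewrite mulf_eq0 gt_eqF //= => /eqP/Pd.
Qed.

Lemma hom_surj {R : realType} {d} {P : 'cV[R]_d -> R} {E t} :
  homogeneous P E -> positive_definite P -> 0 < t ->
  forall y : 'cV[R]_d, exists z, tpow t E *m z = y.
Proof.
move=> H Ppd t0 y.
have U : tpow t E \in unitmx.
  rewrite -unitmx_tr -row_free_unit; apply: inj_row_free => v Hv.
  have : (tpow t E *m v^T)^T = 0 by rewrite trmx_mul trmxK.
  move/eqP; rewrite trmx_eq0 => /eqP/(hom_inj H Ppd t0)/eqP.
  by rewrite trmx_eq0 => /eqP.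
by exists (invmx (tpow t E) *m y); exact: mulKVmx.
Qed.

Lemma cont0_lt {R : realType} {d} {P : 'cV[R]_d -> R} {E} : continuous P ->
  homogeneous P E -> forall e : R, 0 < e ->
  exists2 del : R, 0 < del & forall x, `|x| < del -> P x < e.
Proof.
move=> Pc H e e0.
have := (@cvgrPdist_lt _ _ _ _ (nbhs_filter (0 : 'cV[R]_d)) P (P 0)).1 (Pc 0) e e0.
move/nbhs_ballP => [del del0 Hd]; exists del => // x xd.
have := Hd x; rewrite -ball_normE /ball_ /= sub0r normrN => /(_ xd).
rewrite (hom_P0 H) sub0r normrN => /(le_lt_trans (ler_norm _)) //.
Qed.

Lemma hom_small {R : realType} {d} {P : 'cV[R]_d -> R} {E} :
  continuous P -> positive_definite P -> homogeneous P E ->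
  forall r M : R, 0 < r -> 0 < M ->
  exists2 T : R, 0 < T & forall t, 0 < t -> t < T ->
    forall x : 'cV[R]_d, `|x| <= M -> `|tpow t E *m x| < r.
Proof.
move=> Pc Ppd H r M r0 M0.
have [del del0 Hd] := cont0_lt Pc H 1 ltr01.
pose c := 2 * M / del.
have c0 : 0 < c by rewrite /c divr_gt0 // mulr_gt0.
pose r' := r / c.
have r'0 : 0 < r' by rewrite /r' divr_gt0.
have [m m0 Hm] := sphere_lb Pc Ppd r' r'0.
exists m => // t t0 tm x xM.
pose x' := c^-1 *: x.
have x'd : `|x'| < del.
  rewrite /x' normrZ ger0_norm ?invr_ge0 ?ltW // /c invf_div.
  apply: (@le_lt_trans _ _ (del / (2 * M) * M)).
    by rewrite ler_pM2l // divr_gt0 // mulr_gt0.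
  have -> : del / (2 * M) * M = del / 2.
    by field; rewrite gt_eqF.
  lra.
have key : `|tpow t E *m x'| < r'.
  rewrite ltNge; apply/negP => ge.
  set y := tpow t E *m x'.
  have yp : 0 < `|y| by apply: lt_le_trans ge.
  pose l := r' / `|y|.
  have l0 : 0 < l by rewrite /l divr_gt0.
  have l1 : l <= 1 by rewrite /l ler_pdivrMr // mul1r.
  have : `|l *: y| = r' by rewrite normrZ ger0_norm ?ltW // /l divfK ?gt_eqF.
  move/Hm; rewrite /y scalemxAr H //.
  have : P (l *: x') < 1.
    apply: Hd; rewrite normrZ ger0_norm ?ltW //.
    by apply: le_lt_trans x'd; rewrite ler_piMl.
  move=> p1 mp; nra.
have -> : x = c *: x' by rewrite /x' scalerA mulfV ?gt_eqF // scale1r.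
rewrite -scalemxAr normrZ ger0_norm ?ltW //.
have -> : r = c * r' by rewrite /r' mulrC divfK ?gt_eqF.
by rewrite ltr_pM2l.
Qed.

Lemma hom_contracting {R : realType} {d} {P : 'cV[R]_d -> R} {E} :
  continuous P -> positive_definite P -> homogeneous P E -> contracting E.
Proof.
move=> Pc Ppd H; rewrite /contracting.
apply/cvgrPdist_lt => e e0.
have e20 : 0 < e / 2 by rewrite divr_gt0.
have [T T0 HT] := hom_small Pc Ppd H (e / 2) 1 e20 ltr01.
near=> t.
rewrite sub0r normrN normr_id.
apply: (@le_lt_trans _ _ (e / 2)); last by lra.
apply: norm_le_entries; first exact: ltW.
move=> i j.
have -> : (tpow t E) i j = (col j (tpow t E)) i 0 by rewrite mxE.
rewrite colE.
apply: (le_trans (entry_le_norm _ _ _ _ _ _)); apply: ltW; apply: HT.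
- by near: t; exact: nbhs_right_gt.
- by near: t; exact: nbhs_right_lt.
- apply: norm_le_entries => // a b.
  rewrite /delta_mx mxE; case: (_ && _); by rewrite ?normr1 ?normr0.
Unshelve. all: by end_near.
Qed.

Lemma cmod_ge0 {R : realType} (z : R[i]) : 0 <= cmod z.
Proof. by case: z => a b; rewrite /cmod /=; exact: sqrtr_ge0. Qed.

Lemma cmod_tri {R : realType} (z w : R[i]) : cmod (z + w) <= cmod z + cmod w.
Proof. exact: le_normcD. Qed.

Lemma cmodN {R : realType} (z : R[i]) : cmod (- z) = cmod z.
Proof. exact: normcN. Qed.

Lemma exists_small_nz {R : realType} {d} (d0 : (0 < d)%N) (del : R) : 0 < del ->
  exists y : 'cV[R]_d, [/\ y != 0 & `|y| < del].
Proof.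
move=> del0.
pose e0 : 'cV[R]_d := delta_mx (Ordinal d0) 0.
have ne : `|e0| = 1.
  apply/eqP; rewrite eq_le; apply/andP; split.
    apply: norm_le_entries => // a b.
    rewrite /e0 /delta_mx mxE; case: (_ && _); by rewrite ?normr1 ?normr0.
  have := @entry_le_norm _ _ _ e0 (Ordinal d0) 0.
  by rewrite /e0 /delta_mx mxE !eqxx /= normr1.
exists ((del / 2) *: e0); split.
  by rewrite -normr_eq0 normrZ ne mulr1 gtr0_norm ?divr_gt0 // gt_eqF ?divr_gt0.
by rewrite normrZ ne mulr1 gtr0_norm ?divr_gt0 //; lra.
Qed.

Lemma Pt_at0 {R : realType} {d} {P : 'cV[R]_d -> R} {E} {U : set 'cV[R]_d}
  {Pt : 'cV[R]_d -> R[i]} :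
  (0 < d)%N -> continuous P -> homogeneous P E -> U 0 -> ccontinuous_on U Pt ->
  little_o_at0 Pt P -> Pt 0 = 0.
Proof.
move=> d0 Pc H U0 Ptc lo; apply: Normc.eq0_normc.
suff Hle : forall e : R, 0 < e -> cmod (Pt 0) <= e.
  change (cmod (Pt 0) = 0); apply/eqP; rewrite eq_le cmod_ge0 andbT; apply/negP => /negP.
  rewrite -ltNge => c0; have := Hle _ (divr_gt0 c0 (ltr0Sn _ 1)); lra.
move=> e e0.
have e20 : 0 < e / 2 by rewrite divr_gt0.
have H1 := Ptc 0 U0 _ e20.
have H2 := lo 1 ltr01.
rewrite near_withinE in H2.
have [del3 del30 H3] := cont0_lt Pc H _ e20.
move/nbhs_ballP: H1 => [del1 /= del10 Hd1].
move/nbhs_ballP: H2 => [del2 /= del20 Hd2].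
have m0 : 0 < Order.min del1 (Order.min del2 del3).
  by rewrite !lt_min del10 del20 del30.
have [y [y0 yd]] := exists_small_nz d0 _ m0.
move: yd; rewrite !lt_min => /and3P [y1 y2 y3].
have := Hd1 y; rewrite -ball_normE /ball_ /= sub0r normrN => /(_ y1) Hy1.
have := Hd2 y; rewrite -ball_normE /ball_ /= sub0r normrN => /(_ y2 y0) Hy2.
have Hy3 := H3 y y3.
have -> : Pt 0 = Pt y + - (Pt y - Pt 0) by rewrite opprB addrC subrK.
apply: (le_trans (cmod_tri _ _)); rewrite cmodN; lra.
Qed.

Lemma cmod0 {R : realType} : cmod (0 : R[i]) = 0.
Proof. exact: Normc.normc0. Qed.

Theorem mainTheorem3 (R : realType) (d : nat) (P : 'cV[R]_d -> R)
    (U : set 'cV[R]_d) (Pt : 'cV[R]_d -> R[i]) :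
  (0 < d)%N ->
  positive_homogeneous P ->
  open U -> U 0 -> ccontinuous_on U Pt ->
  (little_o_at0 Pt P <-> (forall E, ExpSet P E -> subhomogeneous U Pt E)) /\
  ((forall E, ExpSet P E -> subhomogeneous U Pt E) <->
     (exists2 E, ExpSet P E & subhomogeneous U Pt E)).
Proof.
move=> d0 [Pc Ppd [E0 HE0] cS] Uo U0 Ptc.
have sub_ex : forall E, ExpSet P E -> subhomogeneous U Pt E -> little_o_at0 Pt P.
  move=> E HE [_ _ _ Ec Hb] eps eps0.
  have HEh : homogeneous P E := HE.
  have [tau tau0 Ht] := Hb eps eps0 _ cS.
  have [del del0 Hd] := cont0_lt Pc HEh tau tau0.
  rewrite near_withinE; apply/nbhs_ballP; exists del => //= y.
  rewrite -ball_normE /ball_ /= sub0r normrN => yd y0.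
  have t0 : 0 < P y.
    rewrite lt_def Ppd.1 andbT; apply/eqP => /(Ppd.2) /eqP; exact/negP.
  have [z Hz] := hom_surj HEh Ppd t0 y.
  have Pz : P z = 1.
    have := HEh (P y) t0 z; rewrite Hz => e.
    by apply: (mulfI (lt0r_neq0 t0)); rewrite -e mulr1.
  have := Ht (P y) t0 (Hd y yd) z Pz.
  by rewrite Hz.
have lo_sub : little_o_at0 Pt P -> forall E, ExpSet P E -> subhomogeneous U Pt E.
  move=> lo E HE.
  have HEh : homogeneous P E := HE.
  split => //; first exact: hom_contracting Pc Ppd HEh.
  move=> eps eps0 K cK.
  have Pt00 := Pt_at0 d0 Pc HEh U0 Ptc lo.
  have [M M0 HM] : exists2 M : R, 0 < M & forall x, K x -> `|x| <= M.
    have [M1 [_ HM1]] := compact_bounded cK.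
    exists (`|M1| + 1); first by have := normr_ge0 M1; lra.
    apply: HM1; have := ler_norm M1; lra.
  have [B B0 HB] : exists2 B : R, 0 < B & forall x, K x -> P x <= B.
    have cPK := continuous_compact (continuous_subspaceT Pc) cK.
    have [B1 [_ HB1]] := compact_bounded cPK.
    exists (`|B1| + 1); first by have := normr_ge0 B1; lra.
    move=> x Kx.
    have : `|P x| <= `|B1| + 1 by apply: HB1; [have := ler_norm B1; lra | exists x].
    by move=> h; apply: le_trans h; exact: ler_norm.
  have eps'0 : 0 < eps / B by rewrite divr_gt0.
  have := lo _ eps'0; rewrite near_withinE => /nbhs_ballP [rho /= rho0 Hr].
  have [T T0 HT] := hom_small Pc Ppd HEh rho M rho0 M0.
  exists T => // t t0 tT xi Kxi.
  have yr := HT t t0 tT xi (HM xi Kxi).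
  case: (eqVneq (tpow t E *m xi) 0) => [->|y0].
    by rewrite Pt00 cmod0; apply: mulr_ge0; apply: ltW.
  have := Hr (tpow t E *m xi); rewrite -ball_normE /ball_ /= sub0r normrN.
  move=> /(_ yr y0); rewrite HEh // => h.
  have epsB : eps / B * B = eps by rewrite divfK // gt_eqF.
  have et : 0 < eps / B * t by rewrite mulr_gt0.
  have PB := HB xi Kxi.
  apply: (le_trans h); nra.
split; split.
- exact: lo_sub.
- by move=> Hall; exact: (sub_ex E0 HE0 (Hall _ HE0)).
- by move=> Hall; exists E0 => //; exact: Hall.
- by move=> [E HE Hs]; apply: lo_sub; exact: (sub_ex E HE Hs).
Qed.
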